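(* Let $N\geq 2$ be an integer and let $\mu,m,q$ be independent indeterminates over $\mathbb C$. Then the polynomial $$P(X)=X^{2N-1}+\mu^{N}m\,q\,X^{N-1}+\mu^{2N-1}q^{2}$$ is irreducible in $\mathbb C(\mu,m,q)[X]$. Equivalently, its $2N-1$ roots, regarded as multivalued algebraic functions of $(\mu,m,q)$, are permuted transitively by analytic continuation along closed loops in the parameter space.
   Context: Physical meaning (for orientation only): this is the polynomial equation satisfied by the glueball operator $S$ in the $\mathrm U(N)$ gauge theory with one adjoint field $\phi$, a single flavour of quarks of mass $m$, and tree-level superpotential $\frac12\mu\,\mathrm{Tr}\,\phi^2+\tilde Q(\phi-m)Q$, with instanton factor $q$. Its $2N-1$ roots are the glueball condensates in the $N$ ''confining'' vacua (unbroken $\mathrm U(N)$) and the $N-1$ ''Higgs'' vacua (gauge group broken to $\mathrm U(N-1)$); the statement that these vacua can all be smoothly connected to each other (a single phase) is the irreducibility of $P$. *)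

(* Defs.v *)
From HB Require Import structures.
From mathcomp Require Import all_boot all_order all_algebra.
From mathcomp Require Import fraction complex.
From mathcomp Require Import Rstruct.
From Stdlib Require Rdefinitions.
Set Implicit Arguments. Unset Strict Implicit. Unset Printing Implicit Defensive.
Import Order.TTheory GRing.Theory Num.Theory.
Local Open Scope ring_scope.

Definition CC : fieldType := (Rdefinitions.R)[i].

Definition Kmu : fieldType := {fraction {poly CC}}.
(* C(mu)(m) = C(mu,m) *)
Definition Kmum : fieldType := {fraction {poly Kmu}}.
(* C(mu,m)(q) = C(mu,m,q) *)
Definition Kmumq : fieldType := {fraction {poly Kmum}}.

Local Notation "x %:F" := (@FracField.tofrac _ x) (format "x %:F").

Definition mu : Kmumq := ((((('X : {poly CC})%:F : Kmu)%:P)%:F : Kmum)%:P)%:F.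
Definition mass : Kmumq := ((('X : {poly Kmu})%:F : Kmum)%:P)%:F.
Definition qinst : Kmumq := ('X : {poly Kmum})%:F.

Definition glueP (N : nat) : {poly Kmumq} :=
  'X^(2 * N - 1) + (mu ^+ N * mass * qinst) *: 'X^(N - 1)
  + (mu ^+ (2 * N - 1) * qinst ^+ 2)%:P.

(* Main.v *)
Require Import Defs.
From HB Require Import structures.
From mathcomp Require Import all_boot all_order all_algebra fraction generic_quotient.
From mathcomp Require Import zify ring.
Set Implicit Arguments. Unset Strict Implicit. Unset Printing Implicit Defensive.
Import GRing.Theory.
Local Open Scope ring_scope.
Local Open Scope quotient_scope.

Lemma frac_repr (R : idomainType) (x : {fraction R}) :
  exists a b : R, b != 0 /\ x * (FracField.tofrac b) = FracField.tofrac a.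
Proof.
elim/quotW: x => r.
exists (frac r).1, (frac r).2; split; first exact: denom_ratioP.
have h : forall y : R, FracField.tofrac y = \pi_({fraction R}) (Ratio y 1).
  by move=> y; rewrite piE.
rewrite !h.
rewrite -[_ * _]FracField.pi_mul.
apply/eqmodP => /=; rewrite FracField.equivfE /FracField.mulf !numden_Ratio ?oner_eq0 ?mulf_neq0 ?oner_eq0 //.
- by rewrite !mulr1 mulrC.
- exact: denom_ratioP.
- exact: denom_ratioP.
Qed.
Lemma clear_den (R : idomainType) (A : {poly {fraction R}}) :
  exists (d : R) (A' : {poly R}), d != 0 /\
    map_poly (@FracField.tofrac R) A' = FracField.tofrac d *: A.
Proof.
elim/poly_ind: A => [|A c [d1 [A1 [d1n hA1]]]].
  by exists 1, 0; rewrite oner_neq0 map_poly0 scaler0.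
have [a [b [bn hc]]] := frac_repr c.
exists (d1 * b), (b *: A1 * 'X + (d1 * a)%:P); split; first by rewrite mulf_neq0.
rewrite rmorphD rmorphM /= map_polyX map_polyC /= map_polyZ hA1 !rmorphM /= -hc.
rewrite -!mul_polyC !polyCM.
ring.
Qed.
Section Weights.
Variable F : idomainType.
Variable e : nat.
Hypothesis e_gt0 : (0 < e)%N.

Definition wt (f : {poly {poly F}}) (i : nat) : nat :=
  if f`_i == 0 then 0%N else (e * size (f`_i)%R + 2 * i)%N.

Lemma sum_ok (Q : nat -> bool) (Qmono : forall m n, (m <= n)%N -> Q n -> Q m)
   (I : Type) (r : seq I) (P : pred I) (Fn : I -> {poly F}) :
  (forall i, P i -> (Fn i == 0) || Q (size (Fn i))) ->
  let s := \sum_(i <- r | P i) Fn i in (s == 0) || Q (size s).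
Proof.
move=> H /=; apply: (big_ind (fun x : {poly F} => is_true ((x == 0) || Q (size x)))) => //.
- by rewrite eqxx.
- move=> x y /orP[/eqP->|Qx]; first by rewrite add0r.
  move=> /orP[/eqP->|Qy]; first by rewrite addr0 Qx orbT.
  apply/orP; right; have := size_add x y.
  case: (leqP (size x) (size y)) => hxy.
  + by move=> /Qmono; apply.
  + by move=> /Qmono; apply.
Qed.

Lemma term_wt (f g : {poly {poly F}}) k j : (j <= k)%N -> f`_j * g`_(k - j) != 0 ->
  (e * size (f`_j * g`_(k - j))%R + 2 * k + e = wt f j + wt g (k - j))%N.
Proof.
move=> jk; rewrite mulf_eq0 negb_or => /andP[fj gj].
rewrite /wt (negbTE fj) (negbTE gj) size_mul //.
have h1 : (0 < size (f`_j)%R)%N by rewrite size_poly_gt0.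
have h2 : (0 < size (g`_(k - j))%R)%N by rewrite size_poly_gt0.

set a := size f`_j in h1 *; set b := size g`_(k - j) in h2 *.
clearbody a b; rewrite -(prednK h1) -(prednK h2) addSn /=; nia.
Qed.

Lemma coef_le (f g : {poly {poly F}}) k T : (e <= T)%N ->
  (forall j, j <= k -> wt f j + wt g (k - j) <= T)%N -> (wt (f * g) k + e <= T)%N.
Proof.
move=> eT H.
have := @sum_ok (fun n => e * n + 2 * k + e <= T)%N _ _ (index_enum 'I_k.+1) predT
   (fun j : 'I_k.+1 => f`_j * g`_(k - j)).
have Hm : forall m n : nat, (m <= n)%N -> (e * n + 2 * k + e <= T)%N -> (e * m + 2 * k + e <= T)%N.
  by move=> m n mn; apply: leq_trans; rewrite !leq_add2r leq_mul2l mn orbT.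
move=> /(_ Hm) /=.
rewrite -coefM /wt; case: eqP => [_ _|_ /=]; first by rewrite add0n.
apply => j _; case: eqP => //= /eqP nz.
have jk : (j <= k)%N := ltn_ord j. by rewrite term_wt // H.
Qed.

Lemma coef_lt (f g : {poly {poly F}}) k T : (e < T)%N ->
  (forall j, j <= k -> wt f j + wt g (k - j) < T)%N -> (wt (f * g) k + e < T)%N.
Proof.
move=> eT H.
have := @sum_ok (fun n => e * n + 2 * k + e < T)%N _ _ (index_enum 'I_k.+1) predT
   (fun j : 'I_k.+1 => f`_j * g`_(k - j)).
have Hm : forall m n : nat, (m <= n)%N -> (e * n + 2 * k + e < T)%N -> (e * m + 2 * k + e < T)%N.
  by move=> m n mn; apply: leq_ltn_trans; rewrite !leq_add2r leq_mul2l mn orbT.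
move=> /(_ Hm) /=.
rewrite -coefM /wt; case: eqP => [_ _|_ /=]; first by rewrite add0n.
apply => j _; case: eqP => //= /eqP nz.
have jk : (j <= k)%N := ltn_ord j. by rewrite term_wt // H.
Qed.

Lemma coef_eq (f g : {poly {poly F}}) k i0 T : (i0 <= k)%N ->
  f`_i0 * g`_(k - i0) != 0 -> (wt f i0 + wt g (k - i0) = T)%N ->
  (forall j, j <= k -> j != i0 -> wt f j + wt g (k - j) < T)%N ->
  (wt (f * g) k + e = T)%N.
Proof.
move=> ik nz0 HT H.
have ik' : (i0 < k.+1)%N by [].
rewrite /wt coefM (bigD1 (Ordinal ik')) //=.
set t := f`_i0 * g`_(k - i0).
set s := \sum_(j < k.+1 | j != Ordinal ik') _.
have := @sum_ok (fun n => e * n + 2 * k + e < T)%N _ _ (index_enum 'I_k.+1)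
   (fun j : 'I_k.+1 => j != Ordinal ik')
   (fun j : 'I_k.+1 => f`_j * g`_(k - j)).
have Hm : forall m n : nat, (m <= n)%N -> (e * n + 2 * k + e < T)%N -> (e * m + 2 * k + e < T)%N.
  by move=> m n mn; apply: leq_ltn_trans; rewrite !leq_add2r leq_mul2l mn orbT.
move=> /(_ Hm) /= Hs.
have {}Hs : (s == 0) || (e * size s + 2 * k + e < T)%N.
  apply: Hs => j jn; case: eqP => //= /eqP nz.
  rewrite term_wt //; last by rewrite -ltnS ltn_ord.
  apply: H; first by rewrite -ltnS ltn_ord.
  by apply: contra jn => /eqP ji; apply/eqP/val_inj.
have Ht := term_wt ik nz0; rewrite HT in Ht.
have -> : t + s = t + s by [].
have st : size (t + s) = size t.
  case/orP: Hs => [/eqP->|Hs]; first by rewrite addr0.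
  apply: size_addl; move: Hs; rewrite -Ht ltn_add2r ltn_add2r ltn_mul2l; by case/andP.
have tn : t + s != 0 by rewrite -size_poly_eq0 st size_poly_eq0.
by rewrite (negbTE tn) st.
Qed.

Lemma wt_gt0 (f : {poly {poly F}}) i : (0 < wt f i)%N -> f`_i != 0.
Proof. by rewrite /wt; case: eqP. Qed.

Lemma wt_extremes (f : {poly {poly F}}) : f != 0 -> exists W i0 i1,
  (forall i, (wt f i <= W)%N) /\ wt f i0 = W /\ wt f i1 = W /\ (e <= W)%N /\
      (forall i, (i < i0)%N -> (wt f i < W)%N) /\
      (forall i, (i1 < i)%N -> (wt f i < W)%N).
Proof.
move=> fn.
have sp : (0 < size f)%N by rewrite size_poly_gt0.
pose W := \max_(i < size f) wt f i.
have bnd : forall i, (wt f i <= W)%N.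
  move=> i; case: (ltnP i (size f)) => hi.
    rewrite /W. have := @leq_bigmax _ (fun j : 'I_(size f) => wt f j) (Ordinal hi). by [].
  by rewrite /wt nth_default // eqxx.
have eW : (e <= W)%N.
  apply: leq_trans (bnd (size f).-1).
  rewrite /wt -lead_coefE lead_coef_eq0 (negbTE fn).
  have : (0 < size (lead_coef f))%N by rewrite size_poly_gt0 lead_coef_eq0.
  case: (size _) => // n _; rewrite mulnS; lia.
have cp : (0 < #|'I_(size f)|)%N by rewrite card_ord.
have [i2 hi2] := @eq_bigmax _ (fun j : 'I_(size f) => wt f j) cp.
have exP : exists i, (fun i => wt f i == W) i by exists i2; rewrite /= -hi2.
have ubP : forall i, (fun i => wt f i == W) i -> (i <= size f)%N.
  move=> i /= /eqP hi; case: (ltnP i (size f)) => [/ltnW//|hs].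
  by move: eW; rewrite -hi /wt nth_default // eqxx leqn0 => /eqP e0; move: e_gt0; rewrite e0.
case: (ex_minnP exP) => i0 /eqP h0 m0.
case: (ex_maxnP exP ubP) => i1 /eqP h1 m1.
exists W, i0, i1; do 5?split => //.
- move=> i ii0; rewrite ltn_neqAle bnd andbT; apply/negP => /m0; lia.
- move=> i ii1; rewrite ltn_neqAle bnd andbT; apply/negP => /m1; lia.
Qed.

Lemma split_trivial (A B : {poly {poly F}}) W : odd e -> A != 0 -> B != 0 ->
  (forall i, (wt (A * B) i <= W)%N) -> wt (A * B) 0 = W -> wt (A * B) e = W ->
  size (A * B) = e.+1 -> size A = 1%N \/ size B = 1%N.
Proof.
move=> oe An Bn hW h0 he hs.
have [Wa [a0 [a1 [ba [ha0 [ha1 [eWa [la ra]]]]]]]] := wt_extremes An.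
have [Wb [b0 [b1 [bb [hb0 [hb1 [eWb [lb rb]]]]]]]] := wt_extremes Bn.
have eT : (e <= Wa + Wb)%N by apply: leq_trans eWa _; rewrite leq_addr.
have eT' : (e < Wa + Wb)%N by apply: leq_trans (leq_add eWa eWb); rewrite -addn1 leq_add2l.
have Ale : forall k, (wt (A * B) k + e <= Wa + Wb)%N.
  by move=> k; apply: coef_le => // j _; apply: leq_add.
have Aa0 : A`_a0 != 0 by apply: wt_gt0; rewrite ha0; lia.
have Aa1 : A`_a1 != 0 by apply: wt_gt0; rewrite ha1; lia.
have Bb0 : B`_b0 != 0 by apply: wt_gt0; rewrite hb0; lia.
have Bb1 : B`_b1 != 0 by apply: wt_gt0; rewrite hb1; lia.
have E0 : (wt (A * B) (a0 + b0) + e = Wa + Wb)%N.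
  apply: (@coef_eq _ _ _ a0); first by rewrite leq_addr.
  - by rewrite addKn mulf_neq0.
  - by rewrite addKn ha0 hb0.
  move=> j jk ja; case: (ltngtP j a0) => hj; last by rewrite hj eqxx in ja.
  + by apply: leq_trans (leq_add (la _ hj) (bb _)) _.
  + have hb : (a0 + b0 - j < b0)%N by lia.
    by rewrite -addnS; exact: (leq_add (ba _) (lb _ hb)).
have WW : (Wa + Wb = W + e)%N.
  apply/eqP; rewrite eqn_leq; apply/andP; split.
    by rewrite -E0 leq_add2r.
  by rewrite -h0; apply: Ale.
have a00 : a0 = 0%N.
  case: (posnP a0) => // ha.
  have : (wt (A * B) 0 + e < Wa + Wb)%N.
    apply: coef_lt => // j; rewrite leqn0 => /eqP -> /=.
    by apply: leq_trans (leq_add (la _ ha) (bb _)) _.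
  by rewrite h0 WW ltnn.
have E1 : (wt (A * B) (a1 + b1) + e = Wa + Wb)%N.
  apply: (@coef_eq _ _ _ a1); first by rewrite leq_addr.
  - by rewrite addKn mulf_neq0.
  - by rewrite addKn ha1 hb1.
  move=> j jk ja; case: (ltngtP j a1) => hj; last by rewrite hj eqxx in ja.
  + have hb : (b1 < a1 + b1 - j)%N by lia.
    by rewrite -addnS; exact: (leq_add (ba _) (rb _ hb)).
  + by apply: leq_trans (leq_add (ra _ hj) (bb _)) _.
have s1 : (a1 + b1 <= e)%N.
  have : (0 < wt (A * B) (a1 + b1))%N by lia.
  move/wt_gt0; apply: contraR; rewrite -ltnNge -hs => hk.
  by rewrite nth_default.
have s2 : (a1 + b1 = e)%N.
  apply/eqP; rewrite eqn_leq s1 /=; rewrite leqNgt; apply/negP => hk.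
  have : (wt (A * B) e + e < Wa + Wb)%N.
    apply: coef_lt => // j je.
    case: (ltnP a1 j) => hj.
      by apply: leq_trans (leq_add (ra _ hj) (bb _)) _.
    have hb : (b1 < e - j)%N by lia.
    by rewrite -addnS; exact: (leq_add (ba _) (rb _ hb)).
  by rewrite he WW ltnn.
have szA : (a1 < size A)%N.
  by rewrite ltnNge; apply: contra Aa1 => h; rewrite nth_default.
have szB : (b1 < size B)%N.
  by rewrite ltnNge; apply: contra Bb1 => h; rewrite nth_default.
have hsz : (size A + size B = e.+2)%N.
  move: hs; rewrite size_mul //.
  have : (0 < size A)%N by lia.
  by case: (size A) => // n _; rewrite addSn /= => ->.
have a1e : a1 = (size A).-1 by lia.
have hA : wt A 0 = wt A a1 by rewrite ha1 -ha0 a00.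
move: hA; rewrite /wt -a00 (negbTE Aa0) (negbTE Aa1) a00 muln0 addn0 => hA.
have d2 : (e %| 2 * a1)%N.
  apply/dvdnP; exists (size (A`_0)%R - size (A`_a1)%R)%N; rewrite mulnBl; lia.
move: d2; rewrite Gauss_dvdr ?coprimen2 // => /dvdnP [t ht].
have : (t <= 1)%N by nia.
case: t ht => [|[|//]] ht _; [left | right]; lia.
Qed.
End Weights.
Definition cmu : Kmum := FracField.tofrac ((FracField.tofrac ('X : {poly CC}) : Kmu)%:P).
Definition cm : Kmum := FracField.tofrac ('X : {poly Kmu}).
Notation tf := (@FracField.tofrac {poly Kmum}).

Lemma mu_def : mu = tf cmu%:P. Proof. by []. Qed.
Lemma mass_def : mass = tf cm%:P. Proof. by []. Qed.
Lemma q_def : qinst = tf 'X. Proof. by []. Qed.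

Lemma e1 N : tf ((cmu ^+ N * cm)%:P * 'X) = tf cmu%:P ^+ N * tf cm%:P * tf 'X.
Proof. by rewrite polyCM polyC_exp !tofracM tofracXn. Qed.
Lemma e2 n : tf ((cmu ^+ n)%:P * 'X^2) = tf cmu%:P ^+ n * tf 'X ^+ 2.
Proof. by rewrite polyC_exp !tofracM !tofracXn. Qed.

Definition Pp (N : nat) : {poly {poly Kmum}} :=
  'X^(2 * N - 1) + ((cmu ^+ N * cm)%:P * 'X)%:P * 'X^(N - 1)
  + ((cmu ^+ (2 * N - 1))%:P * 'X^2)%:P.

Lemma map_Pp N : map_poly tf (Pp N) = glueP N.
Proof.
rewrite /Pp /glueP mu_def mass_def q_def.
rewrite !rmorphD /= map_polyXn rmorphM /= !map_polyC /= map_polyXn -mul_polyC.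
rewrite e1 e2.
by [].
Qed.

Lemma Pp_coef N (hN : (2 <= N)%N) i : (Pp N)`_i =
  if i == 0%N then (cmu ^+ (2 * N - 1))%:P * 'X^2
  else if i == (N - 1)%N then (cmu ^+ N * cm)%:P * 'X
  else if i == (2 * N - 1)%N then 1 else 0.
Proof.
rewrite /Pp !coefD coefXn coefMXn !coefC.
have ne : forall a b : nat, a <> b -> (a == b) = false by move=> a b /eqP/negbTE.
case: (eqVneq i 0%N) => [->|i0].
  rewrite eqxx (ne 0%N (2 * N - 1)%N); last by lia.
  rewrite (_ : (0 < N - 1)%N = true); last by lia.
  by rewrite add0r add0r.
case: (eqVneq i (N - 1)%N) => [->|i1].
  rewrite (ne (N - 1)%N (2 * N - 1)%N); last by lia.
  rewrite ltnn subnn eqxx /=.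
  by rewrite add0r addr0.
rewrite addr0.
case: ltnP => hi.
  rewrite addr0; case: (eqVneq i (2 * N - 1)%N) => [e2|i2]; last by [].
  by exfalso; lia.
have -> : (i - (N - 1) == 0)%N = false by apply/eqP; lia.
by rewrite addr0; case: eqP.
Qed.

Lemma cmu_neq0 : cmu != 0.
Proof. rewrite /cmu tofrac_eq0 polyC_eq0 tofrac_eq0 polyX_eq0. by []. Qed.
Lemma cm_neq0 : cm != 0.
Proof. rewrite /cm tofrac_eq0 polyX_eq0. by []. Qed.

Unset Implicit Arguments.
Local Close Scope quotient_scope.
Lemma size_cmulXn (c : {poly Kmum}) (b : Kmum) n : c != 0 -> b != 0 ->
  size (c * (b%:P * 'X^n)) = (size c + n)%N.
Proof.
move=> cn bn.
have h : b%:P * 'X^n != 0 by rewrite -size_poly_eq0 size_Cmul // size_polyXn.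
rewrite size_mul // size_Cmul // size_polyXn addnS.
by [].
Qed.

Theorem lemma4p1 (N : nat) (hN : (2 <= N)%N) : irreducible_poly (glueP N).
Proof.
have e_gt0 : (0 < 2 * N - 1)%N by lia.
have oe : odd (2 * N - 1).
  by rewrite (_ : (2 * N - 1 = (2 * (N - 1)).+1)%N); [rewrite /= oddM | lia].
have inj : injective tf by move=> x y /eqP; rewrite tofrac_eq => /eqP.
have szP : size (Pp N) = (2 * N - 1).+1.
  rewrite /Pp -addrA size_addl size_polyXn //.
  apply: leq_ltn_trans (size_add _ _) _; rewrite gtn_max.
  apply/andP; split; last by apply: leq_ltn_trans (size_polyC_leq1 _) _.
  apply: leq_ltn_trans (size_mul_leq _ _) _; rewrite size_polyXn addnS /=.
  apply: leq_ltn_trans (leq_add (size_polyC_leq1 _) (leqnn (N - 1))) _; lia.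
have szG : size (glueP N) = (2 * N - 1).+1.
  by rewrite -map_Pp size_map_inj_poly ?rmorph0.
split; first by rewrite szG; lia.
move=> d sd1 dd.
have Gn : glueP N != 0 by rewrite -size_poly_eq0 szG.
have dn : d != 0 by apply: contraNneq Gn => d0; move: dd; rewrite d0 dvd0p.
have hq : glueP N %/ d * d = glueP N := divpK dd.
have qn : glueP N %/ d != 0 by apply: contraNneq Gn => q0; rewrite -hq q0 mul0r.
set q := glueP N %/ d in hq qn *.
have [dA [A [dAn hA]]] := clear_den d.
have [dB [B [dBn hB]]] := clear_den q.
have szA : size A = size d.
  by rewrite -(size_map_inj_poly inj (rmorph0 _)) hA size_scale // tofrac_eq0.
have szB : size B = size q.
  by rewrite -(size_map_inj_poly inj (rmorph0 _)) hB size_scale // tofrac_eq0.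
have An : A != 0 by rewrite -size_poly_eq0 szA size_poly_eq0.
have Bn : B != 0 by rewrite -size_poly_eq0 szB size_poly_eq0.
have hAB : A * B = (dA * dB) *: Pp N.
  apply: (map_inj_poly inj (rmorph0 _)).
  rewrite rmorphM /= hA hB map_polyZ map_Pp -hq -scalerAl -scalerAr scalerA.
  by rewrite rmorphM [d * _]mulrC.
set c := dA * dB in hAB.
have cn : c != 0 by rewrite mulf_neq0.
have cXn : forall (b : Kmum) n, b != 0 -> c * (b%:P * 'X^n) != 0.
  by move=> b n bn; rewrite -size_poly_eq0 size_cmulXn // addn_eq0 size_poly_eq0 (negbTE cn).
have a1n : cmu ^+ N * cm != 0.
  apply: mulf_neq0; [apply: expf_neq0; exact: cmu_neq0 | exact: cm_neq0].
have b1n : cmu ^+ (2 * N - 1) != 0.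
  apply: expf_neq0; exact: cmu_neq0.
have wtC : forall i, wt (2 * N - 1) (A * B) i =
   if i == 0%N then ((2 * N - 1) * (size c + 2))%N
   else if i == (N - 1)%N then ((2 * N - 1) * (size c + 1) + 2 * (N - 1))%N
   else if i == (2 * N - 1)%N then ((2 * N - 1) * size c + 2 * (2 * N - 1))%N
   else 0%N.
  move=> i; rewrite /wt hAB coefZ Pp_coef //.
  case: (eqVneq i 0%N) => [->|i0].
    rewrite (negbTE (cXn _ _ b1n)) (size_cmulXn _ _ _ cn b1n) muln0 addn0.
    reflexivity.
  case: (eqVneq i (N - 1)%N) => [->|i1].
    rewrite -['X]expr1 (negbTE (cXn _ _ a1n)) (size_cmulXn _ _ _ cn a1n).
    reflexivity.
  case: (eqVneq i (2 * N - 1)%N) => [->|i2].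
    by rewrite mulr1 (negbTE cn).
  by rewrite mulr0 eqxx.
have ne : forall a b : nat, a <> b -> (a == b) = false by move=> a b /eqP/negbTE.
have := @split_trivial _ _ e_gt0 A B ((2 * N - 1) * (size c + 2))%N oe An Bn.
case.
- move=> i; rewrite wtC.
  case: ifP => _; first by [].
  case: ifP => _; first nia.
  case: ifP => _; first nia.
  lia.
- by rewrite wtC.
- rewrite wtC (ne (2 * N - 1)%N 0%N); last lia.
  rewrite (ne (2 * N - 1)%N (N - 1)%N); last lia.
  rewrite eqxx; nia.
- by rewrite hAB size_scale // szP.
- by rewrite szA => sA; rewrite sA in sd1.
- rewrite szB => sB.
  rewrite -dvdp_size_eqp //; apply/eqP.
  by rewrite -hq size_mul // sB.
Qed.
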